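(* In the LSM/LOOLSM setting of the context, for every exercise index $i$ and path $n$, the path-wise look-ahead bias satisfies $$\hat B^{[i]}_n\le I\Big[\,|\hat C^{[i]}_n-Z^{[i]}_n|\le h_n\,|V^{[i+1]}_n-Z^{[i]}_n|\,\Big]\;|V^{[i+1]}_n-Z^{[i]}_n|.$$
   Context: $N$ paths are simulated. At exercise time $t_i$ we are given: - discounted payouts $Z^{[i]}_n$; - next-step path-wise option values $V^{[i+1]}_n$; - an $N\times M$ regressor matrix $X$ of full rank with rows $x_n$. Let $H=X(X^\top X)^{-1}X^\top$ and let $h_n=x_n(X^\top X)^{-1}x_n^\top$ be the leverage, with $h_n<1$. Define: - the LSM continuation estimate $\hat C^{[i]}=HV^{[i+1]}$; - the leave-one-out estimate $\hat C'^{[i]}_n=\hat C^{[i]}_n-\dfrac{h_n(V^{[i+1]}_n-\hat C^{[i]}_n)}{1-h_n}$. The LSM update is $I[\hat C^{[i]}_n\ge Z^{[i]}_n](V^{[i+1]}_n-Z^{[i]}_n)+Z^{[i]}_n$, and the LOOLSM update is the same with $\hat C'^{[i]}_n$ in place of $\hat C^{[i]}_n$. The path-wise look-ahead bias is their difference: $$\hat B^{[i]}_n=\big(I[Z^{[i]}_n\le\hat C^{[i]}_n]-I[Z^{[i]}_n\le\hat C'^{[i]}_n]\big)(V^{[i+1]}_n-Z^{[i]}_n).$$ $I[\cdot]$ denotes the indicator function. *)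

(* Defs.v *)
From mathcomp Require Import all_boot all_order all_algebra.
Set Implicit Arguments. Unset Strict Implicit. Unset Printing Implicit Defensive.
Import Order.TTheory GRing.Theory Num.Theory.
Local Open Scope ring_scope.

Definition ind (R : ringType) (b : bool) : R := (b : nat)%:R.

Section LSM.
Variables (R : realFieldType) (N M : nat).

Definition hatmx (X : 'M[R]_(N, M)) : 'M[R]_N :=
  X *m invmx (X^T *m X) *m X^T.

Definition leverage (X : 'M[R]_(N, M)) (n : 'I_N) : R :=
  (row n X *m invmx (X^T *m X) *m (row n X)^T) 0 0.

Definition lsm_C (X : 'M[R]_(N, M)) (V : 'cV[R]_N) (n : 'I_N) : R :=
  (hatmx X *m V) n 0.

Definition loo_C (X : 'M[R]_(N, M)) (V : 'cV[R]_N) (n : 'I_N) : R :=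
  lsm_C X V n - leverage X n * (V n 0 - lsm_C X V n) / (1 - leverage X n).

Definition lookahead_bias (X : 'M[R]_(N, M)) (Z V : 'cV[R]_N) (n : 'I_N) : R :=
  (ind R (Z n 0 <= lsm_C X V n) - ind R (Z n 0 <= loo_C X V n))
  * (V n 0 - Z n 0).
End LSM.

(* Main.v *)
Require Import Defs.
From mathcomp Require Import all_boot all_order all_algebra.
From mathcomp Require Import ring lra.
Import Order.TTheory GRing.Theory Num.Theory.
Local Open Scope ring_scope.

Lemma key (R : realFieldType) (c z v h : R) : h < 1 ->
  (ind R (z <= c) - ind R (z <= c - h * (v - c) / (1 - h))) * (v - z) <=
  ind R (`|c - z| <= h * `|v - z|) * `|v - z|.
Proof.
move=> h1.
have hp : 0 < 1 - h by rewrite subr_gt0.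
have e : c - h * (v - c) / (1 - h) - z = ((c - z) - h * (v - z)) / (1 - h).
  by field; rewrite gt_eqF.
have E : (z <= c - h * (v - c) / (1 - h)) = (0 <= (c - z) - h * (v - z)).
  by rewrite -subr_ge0 e pmulr_lge0 // invr_gt0.
rewrite E /ind.
have nv : 0 <= `|v - z| by [].
have G : forall b : bool, 0 <= (b%:R : R) * `|v - z|.
  by move=> b; apply: mulr_ge0.
case: (lerP z c) => zc; case: (lerP 0 (c - z - h * (v - z))) => w /=;
  rewrite ?subrr ?mul0r ?subr0 ?mul1r ?sub0r.
- exact: G.
- case: (lerP 0 (v - z)) => vz; last by apply: le_trans (G _); apply: ltW.
  rewrite (ger0_norm vz).
  have -> : (c - z <= h * (v - z)) = true by apply/idP; lra.
  by rewrite mul1r.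
- case: (lerP 0 (v - z)) => vz.
    by apply: le_trans (G _); rewrite mulN1r oppr_le0.
  rewrite (ltr0_norm vz).
  have -> : (z - c <= h * - (v - z)) = true by apply/idP; lra.
  by rewrite mul1r mulN1r.
- exact: G.
Qed.

(* One exercise time t_i: Z = Z^{[i]}, V = V^{[i+1]}, X the regressors. *)
Theorem lemmaA1 (R : realFieldType) (N M : nat) (X : 'M[R]_(N, M))
  (Z V : 'cV[R]_N) :
  \rank X = M ->
  (forall n : 'I_N, leverage X n < 1) ->
  forall n : 'I_N,
    lookahead_bias X Z V n <=
    ind R (`|lsm_C X V n - Z n 0| <= leverage X n * `|V n 0 - Z n 0|)
    * `|V n 0 - Z n 0|.
Proof.
move=> _ hl n; rewrite /lookahead_bias /loo_C; exact: key.
Qed.
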